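(* Let $X$ be a real $n\times p$ matrix ($p<n$) of full column rank and $\sigma>0$. The regression breakdown point of the $\ell_1\square\ell_2$ estimator is at least $m(X)$; that is, for every $f\in\mathbb{R}^p$, $z\in\mathbb{R}^n$ and every $M\subset\{1,\dots,n\}$ with $|M|\leq m(X)$, the set of all first components $\hat g$ of minimizers of $(g,b)\mapsto\sigma\|y-Xg-b\|_1+\frac12\|b\|_2^2$ with $y=Xf+z+e$, where $e$ ranges over all vectors in $\mathbb{R}^n$ with $\operatorname{supp}(e)\subset M$, is bounded.
   Context: For data $y\in\mathbb{R}^n$, the $\ell_1\square\ell_2$ estimator is the first component $\hat g$ of a solution $(\hat g,\hat b)$ of $\min_{(g,b)\in\mathbb{R}^p\times\mathbb{R}^n}\sigma\|y-Xg-b\|_1+\frac12\|b\|_2^2$. The regression breakdown point of an estimator is the maximum number of components of the data $y$ that may diverge while keeping the estimator bounded. With $N=\{1,\dots,n\}$ and $x_i^\top$ the rows of $X$, $c_k(X)=\min_{S\subset N,|S|=k}\min_{g\neq0}\frac{\sum_{i\in N\setminus S}|x_i^\top g|}{\sum_{i\in N}|x_i^\top g|}$ for $k\in N$, and $m(X)=\max\{k\in N: c_k(X)>1/2\}$. *)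

(* Defs.v *)
From HB Require Import structures.
From mathcomp Require Import all_boot all_order all_algebra.
From mathcomp Require Import classical_sets reals.
Set Implicit Arguments. Unset Strict Implicit. Unset Printing Implicit Defensive.
Import Order.TTheory GRing.Theory Num.Theory.
Local Open Scope ring_scope.
Local Open Scope classical_set_scope.

Section Defs.
Variable R : realType.

Definition l1norm (k : nat) (v : 'cV[R]_k) : R := \sum_(i < k) `|v i 0|.
Definition l2sq (k : nat) (v : 'cV[R]_k) : R := \sum_(i < k) (v i 0) ^+ 2.

Definition l1l2_obj (n p : nat) (sigma : R) (X : 'M[R]_(n, p)) (y : 'cV[R]_n)
  (g : 'cV[R]_p) (b : 'cV[R]_n) : R :=
  sigma * l1norm (y - X *m g - b) + 2^-1 * l2sq b.

Definition is_l1l2_minimizer (n p : nat) (sigma : R) (X : 'M[R]_(n, p))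
  (y : 'cV[R]_n) (g : 'cV[R]_p) (b : 'cV[R]_n) : Prop :=
  forall (g' : 'cV[R]_p) (b' : 'cV[R]_n),
    l1l2_obj sigma X y g b <= l1l2_obj sigma X y g' b'.

Definition ck_ratio (n p : nat) (X : 'M[R]_(n, p)) (S : {set 'I_n}) (g : 'cV[R]_p) : R :=
  (\sum_(i < n | i \notin S) `|(X *m g) i 0|) / (\sum_(i < n) `|(X *m g) i 0|).

(* c_k(X) = min_{|S| = k} min_{g <> 0} ratio, written as the infimum of the
   set of attained values (the paper's minimum is attained). *)
Definition c_k (n p : nat) (X : 'M[R]_(n, p)) (k : nat) : R :=
  inf [set r : R | exists (S : {set 'I_n}) (g : 'cV[R]_p),
         #|S| = k /\ g != 0 /\ r = ck_ratio X S g].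

(* m(X) = max { k in {1..n} : c_k(X) > 1/2 }, with the convention 0 if empty *)
Definition m_of (n p : nat) (X : 'M[R]_(n, p)) : nat :=
  \max_(k < n.+1 | (0 < k)%N && (2^-1 < c_k X k)) (k : nat).

End Defs.

(* Main.v *)
Require Import Defs.
From HB Require Import structures.
From mathcomp Require Import all_boot all_order all_algebra.
From mathcomp Require Import classical_sets reals.
From mathcomp Require Import ring lra zify.
Import Order.TTheory GRing.Theory Num.Theory.
Local Open Scope ring_scope.

Lemma extend_set n (M : {set 'I_n}) k :
  (#|M| <= k)%N -> (k <= n)%N -> exists S : {set 'I_n}, M \subset S /\ #|S| = k.
Proof.
move=> h1 h2.
have [d hd] : exists d, k = (#|M| + d)%N by exists (k - #|M|)%N; lia.
elim: d M h1 hd => [|d IH] M h1 hd.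
  by exists M; split => //; lia.
have hlt : (#|M| < n)%N by lia.
have : (0 < #|~: M|)%N by have := cardsC M; rewrite card_ord; lia.
move/card_gt0P => [x]; rewrite inE => hx.
have hc : #|x |: M| = #|M|.+1 by rewrite cardsU1 hx.
have [S [hS1 hS2]] := IH (x |: M) ltac:(lia) ltac:(lia).
exists S; split => //.
by apply: (fintype.subset_trans _ hS1); apply: finset.subsetUr.
Qed.

Lemma term_le_sum (R : realType) n (a : 'I_n -> R) i :
  `|a i| <= \sum_(k < n) `|a k|.
Proof.
by rewrite (bigD1 i) //= lerDl sumr_ge0.
Qed.

Lemma c_exists (R : realType) n p (X : 'M[R]_(n, p)) (M : {set 'I_n}) :
  (#|M| <= m_of X)%N ->
  exists c : R, 2^-1 < c /\ forall w : 'cV[R]_p,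
    c * \sum_(i < n) `|(X *m w) i 0| <= \sum_(i < n | i \notin M) `|(X *m w) i 0|.
Proof.
move=> hM.
case: (pickP (fun k : 'I_n.+1 => (0 < k)%N && (2^-1 < c_k X k))) => [k Pk | P0].
  have [k0 Pk0 hk0] := @eq_bigmax_cond _
     (fun k : 'I_n.+1 => (0 < k)%N && (2^-1 < c_k X k)) (fun k => val k)
     ltac:(by apply/card_gt0P; exists k).
  have hm : m_of X = k0 by rewrite /m_of hk0.
  have hk0n : (k0 <= n)%N by have := ltn_ord k0; lia.
  have [S [hMS hS]] := @extend_set n M k0 ltac:(lia) hk0n.
  move: Pk0; rewrite unfold_in /= => /andP [_ hc].
  exists (c_k X k0); split => // w.
  have hPS : \sum_(i < n | i \notin S) `|(X *m w) i 0|
           <= \sum_(i < n | i \notin M) `|(X *m w) i 0|.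
    rewrite [X in _ <= X]big_mkcond [X in X <= _]big_mkcond /=.
    apply: ler_sum => i _.
    case: (boolP (i \in S)) => hiS /=.
      by case: ifP.
    have -> : i \notin M by apply/negP => hiM; move/negP: hiS; apply; exact: (fintype.subsetP hMS).
    by [].
  have [hz|hpos] := eqVneq (\sum_(i < n) `|(X *m w) i 0|) 0.
    by rewrite hz mulr0; apply: sumr_ge0.
  have hpos' : 0 < \sum_(i < n) `|(X *m w) i 0|.
    by rewrite lt_def hpos sumr_ge0.
  have hw : w != 0.
    apply/negP => /eqP hw0; move/eqP: hpos; apply.
    by apply: big1 => i _; rewrite hw0 mulmx0 mxE normr0.
  apply: le_trans hPS.
  have hlb : has_lbound [set r : R | exists (S : {set 'I_n}) (g : 'cV[R]_p),
         #|S| = k0 /\ g != 0 /\ r = ck_ratio X S g].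
    exists 0 => r [S' [g [_ [_ ->]]]].
    by rewrite /ck_ratio divr_ge0 // sumr_ge0.
  have := @ge_inf R _ hlb (ck_ratio X S w) (ex_intro _ S (ex_intro _ w (conj hS (conj hw erefl)))).
  rewrite /ck_ratio ler_pdivlMr // => h.
have hm : m_of X = 0%N by rewrite /m_of big_pred0.
have hM0 : M = finset.set0 by apply: cards0_eq; lia.
exists 1; split; first lra.
move=> w; rewrite mul1r hM0; rewrite le_eqVlt; apply/orP; left; apply/eqP; apply: eq_bigl => i; by rewrite inE.
Qed.

Lemma leftinv_bound (R : realType) n p (X : 'M[R]_(n, p)) (B : 'M[R]_(p, n)) :
  B *m X = 1%:M -> forall w : 'cV[R]_p,
  l1norm w <= (\sum_(j < p) \sum_(i < n) `|B j i|) * l1norm (X *m w).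
Proof.
move=> hB w.
have hw : w = B *m (X *m w) by rewrite mulmxA hB mul1mx.
rewrite /l1norm mulr_suml.
apply: ler_sum => j _.
rewrite [in X in X <= _]hw mxE mulr_suml.
apply: le_trans (ler_norm_sum _ _ _) _.
apply: ler_sum => i _.
rewrite normrM ler_wpM2l //.
exact: (@term_le_sum R n (fun k => (X *m w) k 0) i).
Qed.

Lemma term_ineq (R : realType) (sigma z e a b : R) (inM : bool) :
  0 < sigma -> (~~ inM -> e = 0) ->
  sigma * (if inM then - `|a| else `|a|) <=
  sigma * `|z + e - a - b| + 2^-1 * b ^+ 2 - sigma * `|z + e|
     + (sigma ^+ 2 / 2 + 2 * sigma * `|z|).
Proof.
move=> s0 he.
have h1 := lerB_dist (z + e - a) b.
have hb : b ^+ 2 = `|b| ^+ 2 by rewrite real_normK // num_real.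
have hsq := sqr_ge0 (`|b| - sigma).
have hb0 := normr_ge0 b.
have hz0 := normr_ge0 z.
case: inM he => he.
  have h2 := lerB_dist (z + e) a.
  nra.
rewrite he // addr0 in h1 *.
have h2 := lerB_dist a z.
have h3 : `|z - a| = `|a - z| by rewrite distrC.
nra.
Qed.

Theorem corollary4p6 (R : realType) (n p : nat) (X : 'M[R]_(n, p)) (sigma : R) :
  (p < n)%N -> \rank X = p -> 0 < sigma ->
  forall (f : 'cV[R]_p) (z : 'cV[R]_n) (M : {set 'I_n}),
    (#|M| <= m_of X)%N ->
    exists C : R,
      forall e : 'cV[R]_n, (forall i : 'I_n, i \notin M -> e i 0 = 0) ->
      forall (g : 'cV[R]_p) (b : 'cV[R]_n),
        is_l1l2_minimizer sigma X (X *m f + z + e) g b ->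
        l1norm g <= C.
Proof.
move=> _ rk s0 f z M hM.
have [B hB] : exists B : 'M[R]_(p, n), B *m X = 1%:M.
  by apply/row_fullP; rewrite /row_full rk eqxx.
have [c [hc hcw]] := @c_exists R n p X M hM.
set Cb := \sum_(j < p) \sum_(i < n) `|B j i|.
set K := \sum_(i < n) (sigma ^+ 2 / 2 + 2 * sigma * `|z i 0|).
exists (l1norm f + Cb * (K / (sigma * (2 * c - 1)))).
move=> e he g b hmin.
set w := g - f.
set a := X *m w.
set P := \sum_(i < n | i \notin M) `|a i 0|.
set Q := \sum_(i < n | i \in M) `|a i 0|.
have hS : \sum_(i < n) `|a i 0| = Q + P by rewrite (bigID (fun i => i \in M)).
have key : sigma * (P - Q) <= K.
  have H := hmin f 0.
  rewrite /l1l2_obj /l1norm /l2sq in H.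
  have ent1 : forall i, (X *m f + z + e - X *m g - b) i 0 = z i 0 + e i 0 - a i 0 - b i 0.
    by move=> i; rewrite /a /w mulmxBr !mxE; ring.
  have ent2 : forall i, (X *m f + z + e - X *m f - 0) i 0 = z i 0 + e i 0.
    by move=> i; rewrite !mxE; ring.
  move: H; under eq_bigr => i _ do rewrite ent1.
  under [X in _ <= sigma * X + _]eq_bigr => i _ do rewrite ent2.
  rewrite [X in _ <= _ + 2^-1 * X]big1 ?mulr0 ?addr0; last first.
    by move=> i _; rewrite mxE expr0n.
  move=> H.
  have T : \sum_(i < n) sigma * (if i \in M then - `|a i 0| else `|a i 0|)
    <= \sum_(i < n) (sigma * `|z i 0 + e i 0 - a i 0 - b i 0| + 2^-1 * b i 0 ^+ 2
         - sigma * `|z i 0 + e i 0| + (sigma ^+ 2 / 2 + 2 * sigma * `|z i 0|)).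
    apply: ler_sum => i _; apply: term_ineq => //.
    exact: he.
  rewrite !big_split /= -!mulr_sumr in T. rewrite (sumrN _ _ (fun i : 'I_n => sigma * `|z i 0 + e i 0|)) -mulr_sumr in T.
  rewrite /K !big_split /= -!mulr_sumr.
  have T2 : \sum_(i < n) (if i \in M then - `|a i 0| else `|a i 0|) = - Q + P.
    rewrite (bigID (fun i => i \in M)) /=.
    congr (_ + _).
      by rewrite /Q -sumrN; apply: eq_bigr => i ->.
    by apply: eq_bigr => i /negbTE ->.
  rewrite T2 in T.
  lra.
have hcP := hcw w.
rewrite -/a hS -/P in hcP.
have hsc : 0 < sigma * (2 * c - 1) by apply: mulr_gt0 => //; lra.
have hbound : Q + P <= K / (sigma * (2 * c - 1)).
  rewrite ler_pdivlMr //.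
  have := ler_wpM2l (ltW s0) hcP.
  lra.
have hw := @leftinv_bound R n p X B hB w.
rewrite -/a /l1norm hS in hw.
have hCb : 0 <= Cb by rewrite /Cb; apply: sumr_ge0 => j _; apply: sumr_ge0.
have hg : l1norm g <= l1norm f + l1norm w.
  rewrite /l1norm -big_split /=; apply: ler_sum => i _.
  have -> : g i 0 = f i 0 + w i 0 by rewrite /w !mxE; ring.
  exact: ler_normD.
apply: le_trans hg _.
rewrite lerD2l.
apply: le_trans hw _.
exact: ler_wpM2l.
Qed.
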